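(* Let $G$ be strongly connected and $C\subseteq V$. For each of the dynamics BD-B, BD-D, DB-B, DB-D and LD defined below, let $F^{(r)}_C$ denote the fixation probability of $C$ under that dynamics with mutant fitness $r$. Then for every $r>1$, $F^{(1)}_C\le F^{(r)}_C$.
   Context: Let $G=(V,E)$ be a finite directed graph with $N=|V|$ vertices and weight matrix $W=[w_{ij}]$, $w_{ij}>0$ iff $(i,j)\in E$, $\sum_j w_{ij}=1$ for all $i$. A configuration is a set of mutants; the fitness of a vertex is $f_k=r$ if it is a mutant and $f_k=1$ otherwise (evaluated in the current configuration). Starting from configuration $C$ at time $0$, each time step applies one of the following update rules (the rule being fixed throughout): BD-B: choose $i$ with probability $f_i/\sum_k f_k$, then $j$ with probability $w_{ij}$; $j$ takes the type of $i$. BD-D: choose $i$ uniformly ($1/N$), then $j$ with probability $w_{ij}f_j^{-1}/\sum_q w_{iq}f_q^{-1}$; $j$ takes the type of $i$. DB-B: choose $j$ uniformly ($1/N$), then $i$ with probability $w_{ij}f_i/\sum_q w_{qj}f_q$; $j$ takes the type of $i$. DB-D: choose $j$ with probability $f_j^{-1}/\sum_k f_k^{-1}$, then $i$ with probability $w_{ij}/\sum_q w_{qj}$; $j$ takes the type of $i$. LD: choose an edge $(i,j)\in E$ with probability $w_{ij}f_i/\sum_{(q,\ell)\in E}w_{q\ell}f_q$; $j$ takes the type of $i$. The fixation probability is the limit as $t\to\infty$ of the probability that all vertices are mutants at time $t$; $r=1$ is neutral drift. *)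

(* Defs.v *)
From Stdlib Require Import Reals.
Open Scope R_scope.

(* Vertices are 0, ..., N-1.  A weight matrix is W : nat -> nat -> R
   (only entries with indices < N matter).  A configuration (set of mutants)
   is C : nat -> bool (only values on 0..N-1 matter). *)

Fixpoint rsum (n : nat) (f : nat -> R) : R :=
  match n with
  | O => 0
  | S m => rsum m f + f m
  end.

Definition is_weight_matrix (N : nat) (W : nat -> nat -> R) : Prop :=
  (forall i j, (i < N)%nat -> (j < N)%nat -> 0 <= W i j) /\
  (forall i, (i < N)%nat -> rsum N (fun j => W i j) = 1).

Inductive reach (N : nat) (W : nat -> nat -> R) (i : nat) : nat -> Prop :=
  | reach_refl : reach N W i i
  | reach_step : forall k j, reach N W i k -> (j < N)%nat -> W k j > 0 ->
                 reach N W i j.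

Definition strongly_connected (N : nat) (W : nat -> nat -> R) : Prop :=
  forall i j, (i < N)%nat -> (j < N)%nat -> reach N W i j.

Definition fit (r : R) (C : nat -> bool) (k : nat) : R :=
  if C k then r else 1.

Inductive Dynamics := BD_B | BD_D | DB_B | DB_D | LD.

(* probability that, in one step from configuration C, vertex i reproduces
   onto vertex j (j takes the type of i). *)
Definition step_prob (d : Dynamics) (N : nat) (W : nat -> nat -> R) (r : R)
  (C : nat -> bool) (i j : nat) : R :=
  let f := fit r C in
  match d with
  | BD_B => f i / rsum N f * W i j
  | BD_D => / INR N * (W i j / f j / rsum N (fun q => W i q / f q))
  | DB_B => / INR N * (W i j * f i / rsum N (fun q => W q j * f q))
  | DB_D => / f j / rsum N (fun k => / f k) * (W i j / rsum N (fun q => W q j))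
  | LD => W i j * f i / rsum N (fun q => rsum N (fun l => W q l * f q))
  end.

Definition update (C : nat -> bool) (i j : nat) : nat -> bool :=
  fun k => if Nat.eqb k j then C i else C k.

Fixpoint all_mutant (N : nat) (C : nat -> bool) : bool :=
  match N with
  | O => true
  | S m => all_mutant m C && C m
  end.

Fixpoint prob_all_mutant (d : Dynamics) (N : nat) (W : nat -> nat -> R) (r : R)
  (t : nat) (C : nat -> bool) : R :=
  match t with
  | O => if all_mutant N C then 1 else 0
  | S t' => rsum N (fun i => rsum N (fun j =>
              step_prob d N W r C i j * prob_all_mutant d N W r t' (update C i j)))
  end.

(* Main.v *)
Require Import Defs.
From Stdlib Require Import Reals Lra Lia Classical Bool.
Open Scope R_scope.

Lemma rsum_ext n f g : (forall k, (k < n)%nat -> f k = g k) -> rsum n f = rsum n g.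
Proof. induction n; simpl; intros H; auto. rewrite IHn by (intros; apply H; lia). rewrite H by lia; auto. Qed.

Lemma rsum_plus n f g : rsum n (fun k => f k + g k) = rsum n f + rsum n g.
Proof. induction n; simpl; [lra|]. rewrite IHn; lra. Qed.

Lemma rsum_minus n f g : rsum n (fun k => f k - g k) = rsum n f - rsum n g.
Proof. induction n; simpl; [lra|]. rewrite IHn; lra. Qed.

Lemma rsum_scal n c f : rsum n (fun k => c * f k) = c * rsum n f.
Proof. induction n; simpl; [lra|]. rewrite IHn; lra. Qed.

Lemma rsum_scal_r n c f : rsum n (fun k => f k * c) = rsum n f * c.
Proof. induction n; simpl; [lra|]. rewrite IHn; lra. Qed.

Lemma rsum_const n c : rsum n (fun _ => c) = INR n * c.
Proof. induction n; simpl rsum; [simpl; lra|]. rewrite IHn, S_INR; lra. Qed.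

Lemma rsum_le n f g : (forall k, (k < n)%nat -> f k <= g k) -> rsum n f <= rsum n g.
Proof. induction n; simpl; intros H; [lra|]. assert (H1 := H n ltac:(lia)).
  assert (rsum n f <= rsum n g) by (apply IHn; intros; apply H; lia). lra. Qed.

Lemma rsum_nonneg n f : (forall k, (k < n)%nat -> 0 <= f k) -> 0 <= rsum n f.
Proof. intros H. replace 0 with (rsum n (fun _ => 0)). apply rsum_le; auto.
  rewrite rsum_const; lra. Qed.

Lemma rsum_swap n m F : rsum n (fun i => rsum m (fun j => F i j)) = rsum m (fun j => rsum n (fun i => F i j)).
Proof. induction n; simpl.
  - rewrite (rsum_const m 0); lra.
  - rewrite IHn, <- rsum_plus. reflexivity. Qed.

Lemma rsum_ge_term n f k : (forall i, (i < n)%nat -> 0 <= f i) -> (k < n)%nat -> f k <= rsum n f.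
Proof. induction n; simpl; intros H Hk; [lia|].
  assert (0 <= rsum n f) by (apply rsum_nonneg; intros; apply H; lia).
  destruct (Nat.eq_dec k n). subst; lra.
  assert (f k <= rsum n f) by (apply IHn; [intros; apply H; lia | lia]).
  assert (0 <= f n) by (apply H; lia). lra. Qed.

Lemma rsum_update n f g j : (j < n)%nat -> (forall k, (k < n)%nat -> k <> j -> f k = g k) ->
  rsum n f = rsum n g + f j - g j.
Proof. induction n; simpl; intros Hj H; [lia|].
  destruct (Nat.eq_dec j n).
  - subst. rewrite (rsum_ext n f g) by (intros; apply H; lia). lra.
  - rewrite (IHn ltac:(lia)) by (intros; apply H; lia). rewrite (H n) by lia. lra. Qed.

Lemma rsum_cv n (u : nat -> nat -> R) (l : nat -> R) :
  (forall k, (k < n)%nat -> Un_cv (u k) (l k)) ->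
  Un_cv (fun t => rsum n (fun k => u k t)) (rsum n l).
Proof. induction n; simpl; intros H.
  - intros e He. exists 0%nat. intros. unfold Rdist. rewrite Rminus_diag, Rabs_R0; lra.
  - apply CV_plus. apply IHn; intros; apply H; lia. apply H; lia. Qed.

Lemma rsum_le_bound n f c : (forall k, (k < n)%nat -> f k <= c) -> rsum n f <= INR n * c.
Proof. intros H. rewrite <- rsum_const. apply rsum_le; auto. Qed.

Lemma rsum_ge_bound n f c : (forall k, (k < n)%nat -> c <= f k) -> INR n * c <= rsum n f.
Proof. intros H. rewrite <- rsum_const. apply rsum_le; auto. Qed.

Lemma rsum_zero n f : (forall k, (k < n)%nat -> f k = 0) -> rsum n f = 0.
Proof. intros H. rewrite (rsum_ext n f (fun _ => 0)) by auto. rewrite rsum_const; lra. Qed.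

Lemma stationary n : (1 <= n)%nat -> forall q : nat -> nat -> R,
  (forall i j, (i < n)%nat -> (j < n)%nat -> 0 <= q i j) ->
  exists pi : nat -> R, (forall i, (i < n)%nat -> 0 <= pi i) /\ rsum n pi = 1 /\
   forall i, (i < n)%nat -> rsum n (fun j => pi j * q j i) = pi i * rsum n (fun j => q i j).
Proof.
  intros Hn. destruct n as [|m]; [lia|]. clear Hn. induction m as [|m IH]; intros q Hq.
  - exists (fun _ => 1). split; [intros; lra|]. split; [simpl; lra|].
    intros i Hi. assert (i = 0%nat) by lia. subst. simpl. lra.
  - set (n := S m) in *.
    set (D := rsum n (fun j => q n j)).
    assert (HD : 0 <= D) by (apply rsum_nonneg; intros; apply Hq; lia).
    destruct (Req_dec D 0) as [HD0|HDp].
    + exists (fun k => if Nat.eqb k n then 1 else 0).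
      assert (Z : rsum n (fun k => if Nat.eqb k n then 1 else 0) = 0).
      { apply rsum_zero. intros k Hk. destruct (Nat.eqb_spec k n); [lia|auto]. }
      split; [intros k _; destruct (Nat.eqb k n); lra|]. split.
      { change (rsum n (fun k => if Nat.eqb k n then 1 else 0) + (if Nat.eqb n n then 1 else 0) = 1).
        rewrite Z, Nat.eqb_refl; lra. }
      intros i Hi.
      change (rsum n (fun j => (if Nat.eqb j n then 1 else 0) * q j i) + (if Nat.eqb n n then 1 else 0) * q n i
        = (if Nat.eqb i n then 1 else 0) * (rsum n (fun j => q i j) + q i n)).
      rewrite (rsum_zero n (fun j => _ * _)) by (intros k Hk; destruct (Nat.eqb_spec k n); [lia|lra]).
      rewrite Nat.eqb_refl. destruct (Nat.eqb_spec i n).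
      * subst i. fold D. rewrite HD0. lra.
      * assert (q n i <= D) by (apply (rsum_ge_term n (fun j => q n j)); [intros; apply Hq; lia| lia]).
        assert (0 <= q n i) by (apply Hq; lia). lra.
    + assert (HDp' : 0 < D) by lra.
      set (q' := fun i j => q i j + q i n * q n j / D).
      destruct (IH q') as [nu [Hnu1 [Hnu2 Hnu3]]].
      { intros i j Hi Hj. unfold q'. assert (0 <= q i j) by (apply Hq; lia).
        assert (0 <= q i n) by (apply Hq; lia). assert (0 <= q n j) by (apply Hq; lia).
        assert (0 <= q i n * q n j / D) by (apply Rmult_le_pos; [apply Rmult_le_pos; lra| left; apply Rinv_0_lt_compat; lra]). lra. }
      set (X := rsum n (fun i => nu i * q i n)).
      assert (HX : 0 <= X) by (apply rsum_nonneg; intros; apply Rmult_le_pos; [apply Hnu1; lia| apply Hq; lia]).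
      set (s := X / D).
      assert (Hs : 0 <= s) by (unfold s; apply Rmult_le_pos; [lra| left; apply Rinv_0_lt_compat; lra]).
      set (pi0 := fun k => if Nat.eqb k n then s else nu k).
      assert (E0 : rsum n pi0 = rsum n nu) by (apply rsum_ext; intros k Hk; unfold pi0; destruct (Nat.eqb_spec k n); [lia|auto]).
      exists (fun k => pi0 k / (1 + s)).
      split; [intros i Hi; unfold pi0; destruct (Nat.eqb_spec i n); apply Rmult_le_pos; try (left; apply Rinv_0_lt_compat; lra); auto; apply Hnu1; lia|].
      split.
      { change (rsum n (fun k => pi0 k / (1 + s)) + pi0 n / (1+s) = 1).
        unfold Rdiv. rewrite rsum_scal_r, E0, Hnu2. unfold pi0; rewrite Nat.eqb_refl. field. lra. }
      intros i Hi.
      assert (K : rsum (S n) (fun j => pi0 j * q j i) = pi0 i * rsum (S n) (fun j => q i j)).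
      { change (rsum n (fun j => pi0 j * q j i) + pi0 n * q n i = pi0 i * (rsum n (fun j => q i j) + q i n)).
        rewrite (rsum_ext n (fun j => pi0 j * q j i) (fun j => nu j * q j i))
          by (intros k Hk; unfold pi0; destruct (Nat.eqb_spec k n); [lia|auto]).
        unfold pi0 at 1; rewrite Nat.eqb_refl.
        unfold pi0; destruct (Nat.eqb_spec i n).
        - subst i. fold X. fold D. unfold s. field. lra.
        - assert (Hi' : (i < n)%nat) by lia. specialize (Hnu3 i Hi'). unfold q' in Hnu3; cbv beta in Hnu3.
          rewrite (rsum_ext n (fun j => nu j * (q j i + q j n * q n i / D)) (fun j => nu j * q j i + (nu j * q j n) * (q n i / D))) in Hnu3 by (intros; field; lra).
          rewrite rsum_plus, rsum_plus, rsum_scal_r in Hnu3. fold X in Hnu3.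
          rewrite (rsum_ext n (fun j => q i n * q n j / D) (fun j => (q i n / D) * q n j)) in Hnu3 by (intros; field; lra).
          rewrite rsum_scal in Hnu3. fold D in Hnu3.
          change (rsum n (q n)) with D in Hnu3. change (rsum n (q i)) with (rsum n (fun j => q i j)) in Hnu3. unfold s. replace (X / D * q n i) with (X * (q n i / D)) by (field; lra). rewrite Hnu3. field. lra. }
      unfold Rdiv. rewrite (rsum_ext (S n) (fun j => pi0 j * / (1 + s) * q j i) (fun j => / (1+s) * (pi0 j * q j i))) by (intros; ring).
      rewrite rsum_scal, K. ring.
Qed.

Fixpoint prg (N : nat) (P : (nat -> bool) -> nat -> nat -> R) (t : nat) (C : nat -> bool) : R :=
  match t with
  | O => if all_mutant N C then 1 else 0
  | S t' => rsum N (fun i => rsum N (fun j => P C i j * prg N P t' (update C i j)))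
  end.

Lemma prg_eq d N W r t C : prob_all_mutant d N W r t C = prg N (step_prob d N W r) t C.
Proof. revert C; induction t; intros C; simpl; auto.
  apply rsum_ext; intros; apply rsum_ext; intros. rewrite IHt; auto. Qed.

Lemma all_mutant_iff N C : all_mutant N C = true <-> forall k, (k < N)%nat -> C k = true.
Proof. induction N; simpl; split; intros H.
  - intros; lia.
  - auto.
  - apply andb_true_iff in H as [H1 H2]. intros k Hk. destruct (Nat.eq_dec k N). subst; auto.
    apply IHN; auto; lia.
  - apply andb_true_iff; split. apply IHN; intros; apply H; lia. apply H; lia. Qed.

Lemma update_all N C i j : (i < N)%nat -> all_mutant N C = true -> all_mutant N (update C i j) = true.
Proof. rewrite !all_mutant_iff. intros Hi H k Hk. unfold update. destruct (Nat.eqb k j); auto. Qed.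

Definition indb (b : bool) : R := if b then 1 else 0.

Definition stoch N (P : (nat -> bool) -> nat -> nat -> R) :=
  (forall C i j, (i < N)%nat -> (j < N)%nat -> 0 <= P C i j) /\
  (forall C, rsum N (fun i => rsum N (fun j => P C i j)) = 1).

Lemma dsum_le N F G : (forall i j, (i < N)%nat -> (j < N)%nat -> F i j <= G i j) ->
  rsum N (fun i => rsum N (fun j => F i j)) <= rsum N (fun i => rsum N (fun j => G i j)).
Proof. intros H. apply rsum_le; intros. apply rsum_le; intros; auto. Qed.

Lemma dsum_scal_r N P c :
  rsum N (fun i => rsum N (fun j => P i j * c)) = rsum N (fun i => rsum N (fun j => P i j)) * c.
Proof. rewrite <- rsum_scal_r. apply rsum_ext; intros. apply rsum_scal_r. Qed.

Lemma prg_bounds N P : stoch N P -> forall t C, 0 <= prg N P t C <= 1.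
Proof. intros [Hn Hs] t. induction t; intros C; simpl.
  - destruct (all_mutant N C); lra.
  - split.
    + apply rsum_nonneg; intros; apply rsum_nonneg; intros. apply Rmult_le_pos; auto. apply IHt.
    + rewrite <- (Hs C). apply dsum_le. intros.
      specialize (Hn C i j H H0). specialize (IHt (update C i j)).
      rewrite <- (Rmult_1_r (P C i j)) at 2. apply Rmult_le_compat_l; lra. Qed.

Lemma prg_all N P : stoch N P -> forall t C, all_mutant N C = true -> prg N P t C = 1.
Proof. intros [Hn Hs] t. induction t; intros C HC; simpl.
  - rewrite HC; auto.
  - rewrite <- (Hs C). apply rsum_ext; intros; apply rsum_ext; intros.
    rewrite IHt. ring. apply update_all; auto. Qed.

Lemma prg_none N P : (1 <= N)%nat -> forall t C, (forall k, (k < N)%nat -> C k = false) -> prg N P t C = 0.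
Proof. intros HN t. induction t; intros C HC; simpl.
  - destruct (all_mutant N C) eqn:E; auto. rewrite all_mutant_iff in E.
    specialize (E 0%nat ltac:(lia)). rewrite HC in E; [discriminate|lia].
  - apply rsum_zero; intros i Hi; apply rsum_zero; intros j Hj. rewrite IHt. ring.
    intros k0 Hk0. unfold update. destruct (Nat.eqb k0 j); auto. Qed.

Lemma prg_grow N P : stoch N P -> forall t C, prg N P t C <= prg N P (S t) C.
Proof. intros HP. assert (HP' := HP). destruct HP' as [Hn Hs]. intros t. induction t; intros C.
  - destruct (all_mutant N C) eqn:E.
    + rewrite (prg_all N P HP 1 C E). simpl. rewrite E. lra.
    + simpl prg at 1. rewrite E. apply (prg_bounds N P HP 1 C).
  - simpl prg. apply dsum_le; intros. apply Rmult_le_compat_l; auto. Qed.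

Lemma prg_cv N P : stoch N P -> forall C, {l | Un_cv (fun t => prg N P t C) l}.
Proof. intros HP C. apply growing_cv. intros n; apply prg_grow; auto.
  exists 1. intros x [i ->]. apply (prg_bounds N P HP). Qed.

Lemma cv_shift u l : Un_cv u l -> Un_cv (fun t => u (S t)) l.
Proof. intros H e He. destruct (H e He) as [M HM]. exists M. intros n Hn. apply HM. lia. Qed.

Lemma prg_harm N P (HP : stoch N P) (g : (nat -> bool) -> R) :
  (forall C, Un_cv (fun t => prg N P t C) (g C)) ->
  forall C, g C = rsum N (fun i => rsum N (fun j => P C i j * g (update C i j))).
Proof. intros Hg C. apply (UL_sequence (fun t => prg N P (S t) C)).
  - apply (cv_shift (fun t => prg N P t C)); auto.
  - simpl. apply rsum_cv; intros. apply rsum_cv; intros.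
    apply CV_mult. intros e He; exists 0%nat; intros; unfold Rdist; rewrite Rminus_diag, Rabs_R0; lra.
    apply Hg. Qed.

Fixpoint nres (N : nat) (C : nat -> bool) : nat :=
  match N with O => O | S m => (nres m C + (if C m then 0 else 1))%nat end.

Lemma nres_ext N C C' : (forall k, (k < N)%nat -> C k = C' k) -> nres N C = nres N C'.
Proof. induction N; simpl; intros H; auto. rewrite IHN by (intros; apply H; lia). rewrite H by lia; auto. Qed.

Lemma nres_le N C : (nres N C <= N)%nat.
Proof. induction N; simpl; auto. destruct (C N); lia. Qed.

Lemma nres_0 N C : nres N C = O -> all_mutant N C = true.
Proof. rewrite all_mutant_iff. induction N; simpl; intros H k Hk; [lia|].
  destruct (C N) eqn:E; [|lia]. destruct (Nat.eq_dec k N); [subst; auto|]. apply IHN; lia. Qed.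

Lemma nres_pos N C : (0 < nres N C)%nat -> exists v, (v < N)%nat /\ C v = false.
Proof. induction N; simpl; intros H; [lia|]. destruct (C N) eqn:E.
  - destruct IHN as [v [Hv Hc]]; [lia|]. exists v; split; auto.
  - exists N; auto. Qed.

Lemma nres_update N C i j : (j < N)%nat -> C i = true -> C j = false ->
  (nres N (update C i j) + 1 = nres N C)%nat.
Proof. induction N; intros Hj Hi Hjf; [lia|]. simpl.
  destruct (Nat.eq_dec j N).
  - subst. rewrite (nres_ext N (update C i N) C) by (intros k Hk; unfold update; destruct (Nat.eqb_spec k N); [lia|auto]).
    unfold update at 1. rewrite Nat.eqb_refl, Hi, Hjf. lia.
  - rewrite <- IHN by (auto; lia). unfold update at 2. destruct (Nat.eqb_spec N j); [lia|]. lia. Qed.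

Definition Phi N (pi : nat -> R) (C : nat -> bool) := rsum N (fun k => indb (C k) * pi k).

Lemma Phi_update N pi C i j : (j < N)%nat ->
  Phi N pi (update C i j) = Phi N pi C + (indb (C i) - indb (C j)) * pi j.
Proof. intros Hj. unfold Phi. rewrite (rsum_update N _ (fun k => indb (C k) * pi k) j Hj).
  unfold update. rewrite Nat.eqb_refl. ring.
  intros k Hk Hkj. unfold update. destruct (Nat.eqb_spec k j); [lia|auto]. Qed.

Lemma Phi_drift N P pi C : stoch N P ->
  rsum N (fun i => rsum N (fun j => P C i j * Phi N pi (update C i j))) =
  Phi N pi C + rsum N (fun i => rsum N (fun j => P C i j * ((indb (C i) - indb (C j)) * pi j))).
Proof. intros [Hn Hs].
  rewrite (rsum_ext N _ (fun i => rsum N (fun j => P C i j * Phi N pi C + P C i j * ((indb (C i) - indb (C j)) * pi j)))).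
  2:{ intros; apply rsum_ext; intros. rewrite Phi_update; auto. ring. }
  rewrite (rsum_ext N _ (fun i => rsum N (fun j => P C i j * Phi N pi C) + rsum N (fun j => P C i j * ((indb (C i) - indb (C j)) * pi j)))).
  2:{ intros. apply rsum_plus. }
  rewrite rsum_plus, dsum_scal_r, Hs. ring. Qed.

Lemma Phi_all N pi C : rsum N pi = 1 -> all_mutant N C = true -> Phi N pi C = 1.
Proof. intros H1 H2. rewrite all_mutant_iff in H2. unfold Phi. rewrite <- H1. apply rsum_ext.
  intros. rewrite H2; auto. unfold indb; ring. Qed.

Lemma Phi_none N pi C : (forall k, (k < N)%nat -> C k = false) -> Phi N pi C = 0.
Proof. intros H. unfold Phi. apply rsum_zero. intros; rewrite H; auto. unfold indb; ring. Qed.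

Lemma Phi_bounds N pi C : (forall i, (i < N)%nat -> 0 <= pi i) -> rsum N pi = 1 -> 0 <= Phi N pi C <= 1.
Proof. intros H1 H2. unfold Phi. split.
  - apply rsum_nonneg; intros. apply Rmult_le_pos; auto. unfold indb; destruct (C k); lra.
  - rewrite <- H2. apply rsum_le; intros. specialize (H1 k H). unfold indb; destruct (C k); lra. Qed.

Lemma prg_le_Phi N P pi : stoch N P -> (forall i, (i < N)%nat -> 0 <= pi i) -> rsum N pi = 1 ->
  (forall C, rsum N (fun i => rsum N (fun j => P C i j * ((indb (C i) - indb (C j)) * pi j))) <= 0) ->
  forall t C, prg N P t C <= Phi N pi C.
Proof. intros HP Hpi1 Hpi2 Hdr t. induction t; intros C; simpl.
  - destruct (all_mutant N C) eqn:E. rewrite Phi_all; auto; lra. apply Phi_bounds; auto.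
  - apply Rle_trans with (rsum N (fun i => rsum N (fun j => P C i j * Phi N pi (update C i j)))).
    + apply dsum_le; intros. apply Rmult_le_compat_l; auto. apply HP; auto.
    + rewrite Phi_drift by auto. specialize (Hdr C). lra. Qed.

Lemma pow_le1 (x : R) (n : nat) : 0 <= x <= 1 -> x ^ n <= 1.
Proof. intros Hx. induction n; simpl; [lra|]. assert (0 <= x ^ n) by (apply pow_le; lra). nra. Qed.

Lemma pow_le_mono_dec (x : R) (k n : nat) : 0 < x <= 1 -> (k <= n)%nat -> x ^ n <= x ^ k.
Proof. intros Hx Hk. replace n with (k + (n - k))%nat by lia. rewrite pow_add.
  assert (0 < x ^ k) by (apply pow_lt; lra). assert (x ^ (n - k) <= 1) by (apply pow_le1; lra).
  assert (0 <= x ^ (n-k)) by (apply pow_le; lra). nra. Qed.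

Lemma maxp N P (HP : stoch N P) (HN : (1 <= N)%nat) (g Phi0 : (nat -> bool) -> R) (dl : R) :
  0 < dl <= 1 ->
  (forall C, g C = rsum N (fun i => rsum N (fun j => P C i j * g (update C i j)))) ->
  (forall C, Phi0 C <= rsum N (fun i => rsum N (fun j => P C i j * Phi0 (update C i j)))) ->
  (forall C, all_mutant N C = true -> Phi0 C = g C) ->
  (forall C, (forall k, (k < N)%nat -> C k = false) -> Phi0 C = g C) ->
  (forall C, Phi0 C - g C <= 1) ->
  (forall C, (exists u, (u < N)%nat /\ C u = true) -> (exists v, (v < N)%nat /\ C v = false) ->
     exists i j, (i < N)%nat /\ (j < N)%nat /\ C i = true /\ C j = false /\ dl <= P C i j) ->
  forall C, Phi0 C <= g C.
Proof.
  intros Hdl Hg HPhi Hall Hnone Hb Hreach.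
  destruct HP as [Hn Hs].
  set (h := fun C => Phi0 C - g C).
  assert (Hh : forall C, h C <= rsum N (fun i => rsum N (fun j => P C i j * h (update C i j)))).
  { intros C.
    assert (E : rsum N (fun i => rsum N (fun j => P C i j * h (update C i j))) =
       rsum N (fun i => rsum N (fun j => P C i j * Phi0 (update C i j))) - rsum N (fun i => rsum N (fun j => P C i j * g (update C i j)))).
    { rewrite <- rsum_minus. apply rsum_ext; intros. rewrite <- rsum_minus. apply rsum_ext; intros. unfold h. ring. }
    rewrite E. unfold h at 1. rewrite (Hg C) at 1. specialize (HPhi C). lra. }
  destruct (completeness (fun x => exists C, x = h C)) as [M [HM1 HM2]].
  { exists 1. intros x [C ->]. apply Hb. }
  { exists (h (fun _ => true)). eauto. }
  assert (Mub : forall C, h C <= M) by (intros; apply HM1; eauto).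
  assert (Claim : forall k C, nres N C = k -> (exists u, (u < N)%nat /\ C u = true) -> dl ^ k * M <= M - h C).
  { induction k; intros C Hk Hu.
    - apply nres_0 in Hk. unfold h. rewrite Hall by auto. simpl. lra.
    - destruct (nres_pos N C) as [v [Hv Hcv]]; [lia|].
      destruct (Hreach C Hu (ex_intro _ v (conj Hv Hcv))) as [i [j [Hi [Hj [Hci [Hcj Hp]]]]]].
      set (C1 := update C i j).
      assert (Hk1 : nres N C1 = k) by (assert (X := nres_update N C i j Hj Hci Hcj); fold C1 in X; lia).
      assert (Hu1 : exists u, (u < N)%nat /\ C1 u = true).
      { exists j; split; auto. unfold C1, update. rewrite Nat.eqb_refl; auto. }
      specialize (IHk C1 Hk1 Hu1).
      assert (T : P C i j * (M - h C1) <= rsum N (fun i => rsum N (fun j => P C i j * (M - h (update C i j))))).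
      { apply Rle_trans with (rsum N (fun j' => P C i j' * (M - h (update C i j')))).
        - apply (rsum_ge_term N (fun j' => P C i j' * (M - h (update C i j')))); auto.
          intros; apply Rmult_le_pos; auto. specialize (Mub (update C i i0)); lra.
        - apply (rsum_ge_term N (fun i' => rsum N (fun j' => P C i' j' * (M - h (update C i' j'))))); auto.
          intros; apply rsum_nonneg; intros; apply Rmult_le_pos; auto. specialize (Mub (update C i0 k0)); lra. }
      rewrite (rsum_ext N _ (fun i => rsum N (fun j => P C i j) * M - rsum N (fun j => P C i j * h (update C i j)))) in T.
      2:{ intros. rewrite <- rsum_scal_r, <- rsum_minus. apply rsum_ext; intros; ring. }
      rewrite rsum_minus, rsum_scal_r, Hs in T.
      specialize (Hh C).
      assert (0 <= M - h C1) by (specialize (Mub C1); lra).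
      simpl. assert (0 <= dl ^ k * M <= M - h C1 -> dl * (dl ^ k * M) <= P C i j * (M - h C1)) by (intros; nra).
      destruct (Rle_lt_dec 0 (dl ^ k * M)).
      + assert (dl * (dl ^ k * M) <= P C i j * (M - h C1)) by auto. lra.
      + assert (dl * (dl ^ k * M) <= 0) by nra. assert (0 <= P C i j * (M - h C1)) by nra. lra. }
  intros C0.
  assert (HM0 : M <= 0).
  { destruct (Rle_lt_dec M 0); auto. exfalso.
    assert (Hpow : 0 < dl ^ N <= 1) by (split; [apply pow_lt; lra| apply pow_le1; lra]).
    assert (UB : forall C, h C <= M - dl ^ N * M).
    { intros C. destruct (classic (exists u, (u < N)%nat /\ C u = true)) as [Hu|Hu].
      - assert (X := Claim _ C eq_refl Hu).
        assert (dl ^ N <= dl ^ (nres N C)) by (apply pow_le_mono_dec; auto; apply nres_le). nra.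
      - assert (Hnn : forall k, (k < N)%nat -> C k = false).
        { intros k Hk. destruct (C k) eqn:E; auto. exfalso; apply Hu; eauto. }
        unfold h; rewrite Hnone by auto. nra. }
    assert (M <= M - dl ^ N * M) by (apply HM2; intros x [C ->]; apply UB). nra. }
  specialize (Mub C0). unfold h in Mub. lra.
Qed.

Definition colsum N (W : nat -> nat -> R) (j : nat) := rsum N (fun q => W q j).

Definition adyn (d : Dynamics) N (W : nat -> nat -> R) (i j : nat) : R :=
  match d with DB_B | DB_D => W i j / colsum N W j | _ => W i j end.

Lemma W_nonneg N W : is_weight_matrix N W -> forall i j, (i < N)%nat -> (j < N)%nat -> 0 <= W i j.
Proof. intros [H _]; auto. Qed.

Lemma W_le1 N W : is_weight_matrix N W -> forall i j, (i < N)%nat -> (j < N)%nat -> W i j <= 1.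
Proof. intros [H1 H2] i j Hi Hj. rewrite <- (H2 i Hi). apply (rsum_ge_term N (fun j => W i j)); auto. Qed.

Lemma reach_lt N W i k : reach N W i k -> k = i \/ (k < N)%nat.
Proof. induction 1; auto. Qed.

Lemma reach_last N W i j : reach N W i j -> (i < N)%nat -> i <> j -> exists k, (k < N)%nat /\ W k j > 0.
Proof. intros R Hi Hij. destruct R as [|k j Rk Hj Hw]. congruence.
  exists k. split; auto. destruct (reach_lt _ _ _ _ Rk); [subst; auto|auto]. Qed.

Lemma col_edge N W : is_weight_matrix N W -> strongly_connected N W -> forall j, (j < N)%nat ->
  exists k, (k < N)%nat /\ W k j > 0.
Proof. intros HW HS j Hj. destruct N as [|[|N']]; [lia| |].
  - assert (j = 0%nat) by lia. subst. exists 0%nat; split; [lia|].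
    destruct HW as [_ H2]. specialize (H2 0%nat ltac:(lia)). simpl in H2. lra.
  - set (i := if Nat.eqb j 0 then 1%nat else 0%nat).
    assert (Hi : (i < S (S N'))%nat /\ i <> j) by (unfold i; destruct (Nat.eqb_spec j 0); lia).
    destruct Hi as [Hi Hij]. exact (reach_last _ _ _ _ (HS i j Hi Hj) Hi Hij). Qed.

Lemma colsum_pos N W : is_weight_matrix N W -> strongly_connected N W -> forall j, (j < N)%nat -> 0 < colsum N W j.
Proof. intros HW HS j Hj. destruct (col_edge N W HW HS j Hj) as [k [Hk Hw]].
  assert (W k j <= colsum N W j) by (apply (rsum_ge_term N (fun q => W q j)); auto; intros; apply (W_nonneg N W HW); auto). lra. Qed.

Lemma colsum_le N W : is_weight_matrix N W -> forall j, (j < N)%nat -> colsum N W j <= INR N.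
Proof. intros HW j Hj. unfold colsum. rewrite <- (Rmult_1_r (INR N)). apply rsum_le_bound.
  intros; apply (W_le1 N W HW); auto. Qed.

Lemma edge_cut N W C u v : (u < N)%nat -> C u = true -> (v < N)%nat -> C v = false -> reach N W u v ->
  exists i j, (i < N)%nat /\ (j < N)%nat /\ C i = true /\ C j = false /\ W i j > 0.
Proof. intros Hu Hcu Hv Hcv Hr. induction Hr as [|k j Hr IHR Hj Hw].
  - congruence.
  - destruct (C k) eqn:E.
    + exists k, j. repeat split; auto. destruct (reach_lt _ _ _ _ Hr); [subst; auto|auto].
    + apply IHR; auto. destruct (reach_lt _ _ _ _ Hr); [subst; auto|auto]. Qed.

Lemma fit_bounds r C k : 1 <= r -> 1 <= fit r C k <= r.
Proof. unfold fit; destruct (C k); lra. Qed.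

Lemma fit_1 C k : fit 1 C k = 1.
Proof. unfold fit; destruct (C k); lra. Qed.

Lemma Fsum_bounds N r C : 1 <= r -> INR N <= rsum N (fit r C) <= INR N * r.
Proof. intros Hr. split.
  - rewrite <- (Rmult_1_r (INR N)). apply rsum_ge_bound. intros; apply fit_bounds; auto.
  - apply rsum_le_bound. intros; apply fit_bounds; auto. Qed.

Lemma S_bounds N W r C i : is_weight_matrix N W -> 1 <= r -> (i < N)%nat ->
  / r <= rsum N (fun q => W i q / fit r C q) <= 1.
Proof. intros HW Hr Hi. destruct HW as [H1 H2]. split.
  - replace (/ r) with (rsum N (fun q => W i q) * / r) by (rewrite H2; auto; ring).
    rewrite <- rsum_scal_r. apply rsum_le. intros q Hq. unfold Rdiv.
    assert (1 <= fit r C q <= r) by (apply fit_bounds; auto). apply Rmult_le_compat_l; auto. apply Rinv_le_contravar; lra.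
  - rewrite <- (H2 i Hi). apply rsum_le. intros q Hq. unfold Rdiv.
    assert (1 <= fit r C q) by (apply fit_bounds; auto).
    assert (/ fit r C q <= 1) by (rewrite <- Rinv_1; apply Rinv_le_contravar; lra).
    assert (0 <= W i q) by auto. nra. Qed.

Lemma T_bounds N W r C j : is_weight_matrix N W -> 1 <= r -> (j < N)%nat ->
  colsum N W j <= rsum N (fun q => W q j * fit r C q) <= r * colsum N W j.
Proof. intros HW Hr Hj. unfold colsum. split.
  - apply rsum_le. intros q Hq. assert (0 <= W q j) by (apply (W_nonneg N W HW); auto).
    assert (1 <= fit r C q) by (apply fit_bounds; auto). nra.
  - rewrite <- rsum_scal. apply rsum_le. intros q Hq. assert (0 <= W q j) by (apply (W_nonneg N W HW); auto).
    assert (fit r C q <= r) by (apply fit_bounds; auto). nra. Qed.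

Lemma Z_bounds N r C : 1 <= r -> INR N * / r <= rsum N (fun k => / fit r C k) <= INR N.
Proof. intros Hr. split.
  - apply rsum_ge_bound. intros k _. assert (1 <= fit r C k <= r) by (apply fit_bounds; auto). apply Rinv_le_contravar; lra.
  - rewrite <- (Rmult_1_r (INR N)). apply rsum_le_bound. intros k _. assert (1 <= fit r C k <= r) by (apply fit_bounds; auto). rewrite <- Rinv_1. apply Rinv_le_contravar; lra. Qed.

Lemma Dd_eq N W r C : is_weight_matrix N W ->
  rsum N (fun q => rsum N (fun l => W q l * fit r C q)) = rsum N (fit r C).
Proof. intros [H1 H2]. apply rsum_ext. intros q Hq. rewrite rsum_scal_r, H2; auto; ring. Qed.

Lemma div_nn a b : 0 <= a -> 0 < b -> 0 <= a / b.
Proof. intros. unfold Rdiv. apply Rmult_le_pos; auto. left; apply Rinv_0_lt_compat; auto. Qed.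

Lemma rsum_div n f c : rsum n (fun k => f k / c) = rsum n f / c.
Proof. unfold Rdiv. apply rsum_scal_r. Qed.

Lemma INRpos N : (1 <= N)%nat -> 0 < INR N.
Proof. intros; apply lt_0_INR; lia. Qed.

Lemma S_pos N W r C i : is_weight_matrix N W -> 1 <= r -> (i < N)%nat -> 0 < rsum N (fun q => W i q / fit r C q).
Proof. intros. assert (X := S_bounds N W r C i H H0 H1). assert (0 < / r) by (apply Rinv_0_lt_compat; lra). lra. Qed.

Lemma T_pos N W r C j : is_weight_matrix N W -> strongly_connected N W -> 1 <= r -> (j < N)%nat -> 0 < rsum N (fun q => W q j * fit r C q).
Proof. intros. assert (X := T_bounds N W r C j H H1 H2). assert (0 < colsum N W j) by (apply colsum_pos; auto). lra. Qed.

Lemma Z_pos N r C : (1 <= N)%nat -> 1 <= r -> 0 < rsum N (fun k => / fit r C k).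
Proof. intros. assert (X := Z_bounds N r C H0). assert (0 < / r) by (apply Rinv_0_lt_compat; lra).
  assert (0 < INR N) by (apply INRpos; auto). nra. Qed.

Lemma F_pos N r C : (1 <= N)%nat -> 1 <= r -> 0 < rsum N (fit r C).
Proof. intros. assert (X := Fsum_bounds N r C H0). assert (0 < INR N) by (apply INRpos; auto). lra. Qed.

Lemma sp_nonneg d N W r : is_weight_matrix N W -> strongly_connected N W -> (1 <= N)%nat -> 1 <= r ->
  forall C i j, (i < N)%nat -> (j < N)%nat -> 0 <= step_prob d N W r C i j.
Proof. intros HW HS HN Hr C i j Hi Hj.
  assert (Wn := W_nonneg N W HW i j Hi Hj).
  assert (fi := fit_bounds r C i Hr). assert (fj := fit_bounds r C j Hr).
  assert (n0 := INRpos N HN).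
  assert (i0 : 0 <= / INR N) by (left; apply Rinv_0_lt_compat; auto).
  destruct d; unfold step_prob; cbv zeta.
  - apply Rmult_le_pos; [apply div_nn; [lra| apply F_pos; auto]|auto].
  - apply Rmult_le_pos; auto. apply div_nn; [apply div_nn; [auto|lra]|apply S_pos; auto].
  - apply Rmult_le_pos; auto. apply div_nn; [apply Rmult_le_pos; lra|apply T_pos; auto].
  - apply Rmult_le_pos. apply div_nn; [left; apply Rinv_0_lt_compat; lra| apply Z_pos; auto].
    apply div_nn; auto. apply (colsum_pos N W HW HS j Hj).
  - apply div_nn; [apply Rmult_le_pos; lra|]. rewrite Dd_eq by auto. apply F_pos; auto.
Qed.

Lemma sp_sum d N W r : is_weight_matrix N W -> strongly_connected N W -> (1 <= N)%nat -> 1 <= r ->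
  forall C, rsum N (fun i => rsum N (fun j => step_prob d N W r C i j)) = 1.
Proof. intros HW HS HN Hr C.
  assert (n0 := INRpos N HN). destruct HW as [H1 H2].
  destruct d; unfold step_prob; cbv zeta.
  - assert (F := F_pos N r C HN Hr).
    rewrite (rsum_ext N _ (fun i => fit r C i / rsum N (fit r C))).
    + unfold Rdiv. rewrite rsum_scal_r. field. lra.
    + intros i Hi. rewrite rsum_scal. rewrite H2; auto. ring.
  - rewrite (rsum_ext N _ (fun i => / INR N)).
    + rewrite rsum_const. field. lra.
    + intros i Hi. assert (S := S_pos N W r C i (conj H1 H2) Hr Hi). rewrite rsum_scal.
      rewrite rsum_div. field. split; lra.
  - rewrite rsum_swap. rewrite (rsum_ext N _ (fun j => / INR N)).
    + rewrite rsum_const. field. lra.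
    + intros j Hj. assert (T := T_pos N W r C j (conj H1 H2) HS Hr Hj). rewrite rsum_scal.
      rewrite rsum_div. field. split; lra.
  - assert (Z := Z_pos N r C HN Hr). rewrite rsum_swap.
    rewrite (rsum_ext N _ (fun j => / fit r C j / rsum N (fun k => / fit r C k))).
    + unfold Rdiv. rewrite rsum_scal_r. field. lra.
    + intros j Hj. assert (c := colsum_pos N W (conj H1 H2) HS j Hj). unfold colsum in c.
      rewrite rsum_scal, rsum_div. assert (1 <= fit r C j <= r) by (apply fit_bounds; auto). field. repeat split; lra.
  - rewrite (Dd_eq N W r C (conj H1 H2)). assert (F := F_pos N r C HN Hr).
    unfold Rdiv. rewrite (rsum_ext N _ (fun i => rsum N (fun j => W i j * fit r C i) * / rsum N (fit r C))).
    + rewrite rsum_scal_r, (Dd_eq N W r C (conj H1 H2)). field. lra.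
    + intros. apply rsum_scal_r.
Qed.

Lemma INR_ge1 N : (1 <= N)%nat -> 1 <= INR N.
Proof. intros. replace 1 with (INR 1) by reflexivity. apply le_INR; auto. Qed.

Lemma inv_ge a b : 0 < a -> a <= b -> / b <= / a.
Proof. intros. apply Rinv_le_contravar; auto. Qed.

Lemma fit_t r C k : C k = true -> fit r C k = r.
Proof. unfold fit; intros ->; auto. Qed.
Lemma fit_f r C k : C k = false -> fit r C k = 1.
Proof. unfold fit; intros ->; auto. Qed.

Lemma sp_lower d N W r : is_weight_matrix N W -> strongly_connected N W -> (1 <= N)%nat -> 1 <= r ->
  forall C i j, (i < N)%nat -> (j < N)%nat -> C i = true -> C j = false ->
  W i j / (INR N * INR N) <= step_prob d N W r C i j.
Proof. intros HW HS HN Hr C i j Hi Hj Hci Hcj.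
  assert (Wn := W_nonneg N W HW i j Hi Hj).
  assert (n1 := INR_ge1 N HN).
  set (n := INR N) in *.
  assert (Hin : / (n * n) <= / n) by (apply inv_ge; nra).
  assert (Hn0 : 0 < / n) by (apply Rinv_0_lt_compat; lra).
  assert (KK : forall K, / n <= K -> W i j / (n * n) <= W i j * K).
  { intros K HK. unfold Rdiv. apply Rmult_le_compat_l; lra. }
  assert (KK2 : forall K, / (n * n) <= K -> W i j / (n * n) <= W i j * K).
  { intros K HK. unfold Rdiv. apply Rmult_le_compat_l; lra. }
  assert (Fb := Fsum_bounds N r C Hr). fold n in Fb. assert (Fp := F_pos N r C HN Hr).
  destruct d; unfold step_prob; cbv zeta; rewrite ?(fit_t r C i Hci), ?(fit_f r C j Hcj); try change (INR N) with n.
  - set (F := rsum N (fit r C)) in *.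
    replace (r / F * W i j) with (W i j * (r * / F)) by (unfold Rdiv; ring).
    apply KK. assert (/ (n * r) <= / F) by (apply inv_ge; lra).
    replace (/ n) with (r * / (n * r)) by (field; lra). apply Rmult_le_compat_l; lra.
  - set (S := rsum N (fun q => W i q / fit r C q)).
    assert (Sb := S_bounds N W r C i HW Hr Hi). fold S in Sb. assert (Sp := S_pos N W r C i HW Hr Hi). fold S in Sp.
    replace (/ n * (W i j / 1 / S)) with (W i j * (/ n * / S)) by (field; lra).
    apply KK. assert (/ 1 <= / S) by (apply inv_ge; lra). rewrite Rinv_1 in H.
    rewrite <- (Rmult_1_r (/ n)) at 1. apply Rmult_le_compat_l; lra.
  - set (T := rsum N (fun q => W q j * fit r C q)).
    assert (Tb := T_bounds N W r C j HW Hr Hj). fold T in Tb. assert (Tp := T_pos N W r C j HW HS Hr Hj). fold T in Tp.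
    assert (cb := colsum_le N W HW j Hj). fold n in cb.
    replace (/ n * (W i j * r / T)) with (W i j * (/ n * r * / T)) by (field; lra).
    apply KK2. assert (/ (r * n) <= / T) by (apply inv_ge; nra).
    replace (/ (n * n)) with (/ n * r * / (r * n)) by (field; lra). apply Rmult_le_compat_l; [|lra].
    apply Rmult_le_pos; lra.
  - set (Z := rsum N (fun k => / fit r C k)).
    assert (Zb := Z_bounds N r C Hr). fold Z in Zb. fold n in Zb. assert (Zp := Z_pos N r C HN Hr). fold Z in Zp.
    assert (cb := colsum_le N W HW j Hj). fold n in cb. assert (cp := colsum_pos N W HW HS j Hj).
    set (c := colsum N W j) in *. change (rsum N (fun q => W q j)) with c.
    replace (/ 1 / Z * (W i j / c)) with (W i j * (/ Z * / c)) by (field; lra).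
    apply KK2. assert (/ n <= / Z) by (apply inv_ge; lra). assert (/ n <= / c) by (apply inv_ge; lra).
    rewrite Rinv_mult. assert (0 < / Z) by (apply Rinv_0_lt_compat; lra). nra.
  - rewrite (Dd_eq N W r C HW). set (F := rsum N (fit r C)) in *.
    replace (W i j * r / F) with (W i j * (r * / F)) by (unfold Rdiv; ring).
    apply KK. assert (/ (n * r) <= / F) by (apply inv_ge; lra).
    replace (/ n) with (r * / (n * r)) by (field; lra). apply Rmult_le_compat_l; lra.
Qed.

Lemma balance N (a : nat -> nat -> R) pi C :
  (forall i, (i < N)%nat -> rsum N (fun j => pi j * a i j) = pi i * rsum N (fun j => a j i)) ->
  rsum N (fun i => rsum N (fun j => a i j * ((indb (C i) - indb (C j)) * pi j))) = 0.
Proof. intros H.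
  rewrite (rsum_ext N _ (fun i => indb (C i) * rsum N (fun j => pi j * a i j) - rsum N (fun j => a i j * indb (C j) * pi j))).
  2:{ intros i Hi. rewrite <- rsum_scal, <- rsum_minus. apply rsum_ext; intros; ring. }
  rewrite rsum_minus, rsum_swap.
  rewrite (rsum_ext N (fun i => indb (C i) * rsum N (fun j => pi j * a i j)) (fun i => indb (C i) * pi i * rsum N (fun j => a j i))).
  2:{ intros. rewrite H; auto. ring. }
  rewrite (rsum_ext N (fun j => rsum N (fun i => a i j * indb (C j) * pi j)) (fun j => indb (C j) * pi j * rsum N (fun i => a i j))).
  2:{ intros. rewrite <- rsum_scal. apply rsum_ext; intros; ring. }
  ring. Qed.

Lemma drift_ge N P (a : nat -> nat -> R) pi C lam :
  (forall i, (i < N)%nat -> 0 <= pi i) ->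
  (forall i, (i < N)%nat -> rsum N (fun j => pi j * a i j) = pi i * rsum N (fun j => a j i)) ->
  (forall i j, (i < N)%nat -> (j < N)%nat -> 0 <= (indb (C i) - indb (C j)) * (P i j - lam * a i j)) ->
  0 <= rsum N (fun i => rsum N (fun j => P i j * ((indb (C i) - indb (C j)) * pi j))).
Proof. intros Hp Hb Hl.
  assert (B := balance N a pi C Hb).
  replace (rsum N (fun i => rsum N (fun j => P i j * ((indb (C i) - indb (C j)) * pi j)))) with
    (rsum N (fun i => rsum N (fun j => (indb (C i) - indb (C j)) * (P i j - lam * a i j) * pi j)) +
     lam * rsum N (fun i => rsum N (fun j => a i j * ((indb (C i) - indb (C j)) * pi j)))).
  - rewrite B. rewrite Rmult_0_r, Rplus_0_r. apply rsum_nonneg; intros; apply rsum_nonneg; intros.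
    apply Rmult_le_pos; auto.
  - rewrite <- rsum_scal, <- rsum_plus. apply rsum_ext; intros. rewrite <- rsum_scal, <- rsum_plus.
    apply rsum_ext; intros. ring. Qed.

Lemma sp_neutral d N W : is_weight_matrix N W -> (1 <= N)%nat ->
  forall C i j, (i < N)%nat -> (j < N)%nat -> step_prob d N W 1 C i j = / INR N * adyn d N W i j.
Proof. intros HW HN C i j Hi Hj. assert (n0 := INRpos N HN). destruct HW as [H1 H2].
  assert (E1 : rsum N (fit 1 C) = INR N).
  { rewrite (rsum_ext N _ (fun _ => 1)) by (intros; apply fit_1). rewrite rsum_const; ring. }
  destruct d; unfold step_prob, adyn, colsum; cbv zeta; rewrite ?fit_1.
  - rewrite E1. field. lra.
  - rewrite (rsum_ext N (fun q => W i q / fit 1 C q) (fun q => W i q)) by (intros; rewrite fit_1; field).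
    rewrite H2 by auto. field. lra.
  - rewrite (rsum_ext N (fun q => W q j * fit 1 C q) (fun q => W q j)) by (intros; rewrite fit_1; ring).
    rewrite Rmult_1_r; reflexivity.
  - rewrite (rsum_ext N (fun k => / fit 1 C k) (fun _ => 1)) by (intros; rewrite fit_1; field).
    rewrite rsum_const. replace (/ 1 / (INR N * 1)) with (/ INR N) by (field; lra); reflexivity.
  - rewrite (rsum_ext N (fun q => rsum N (fun l => W q l * fit 1 C q)) (fun _ => 1)).
    + rewrite rsum_const. field. lra.
    + intros q Hq. rewrite fit_1, rsum_scal_r, H2; auto; ring.
Qed.

Lemma sp_drift d N W r : is_weight_matrix N W -> strongly_connected N W -> (1 <= N)%nat -> 1 <= r ->
  forall C, exists lam, forall i j, (i < N)%nat -> (j < N)%nat ->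
  0 <= (indb (C i) - indb (C j)) * (step_prob d N W r C i j - lam * adyn d N W i j).
Proof. intros HW HS HN Hr C.
  assert (n0 := INRpos N HN). assert (Fp := F_pos N r C HN Hr).
  assert (iF : 0 < / rsum N (fit r C)) by (apply Rinv_0_lt_compat; auto).
  destruct d.
  - exists (/ rsum N (fit r C)). intros i j Hi j'. assert (Wn := W_nonneg N W HW i j Hi j').
    unfold step_prob, adyn; cbv zeta. unfold indb.
    destruct (C i) eqn:Ei, (C j) eqn:Ej; rewrite ?(fit_t r C i Ei), ?(fit_f r C i Ei); try lra.
    + unfold Rdiv. replace ((1 - 0) * (r * / rsum N (fit r C) * W i j - / rsum N (fit r C) * W i j)) with ((r - 1) * (/ rsum N (fit r C)) * W i j) by ring.
      apply Rmult_le_pos; [|auto]. apply Rmult_le_pos; lra.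
  - exists (/ INR N). intros i j Hi j'. assert (Wn := W_nonneg N W HW i j Hi j').
    set (S := rsum N (fun q => W i q / fit r C q)).
    assert (Sb := S_bounds N W r C i HW Hr Hi). fold S in Sb. assert (Sp := S_pos N W r C i HW Hr Hi). fold S in Sp.
    assert (iS : 1 <= / S) by (rewrite <- Rinv_1; apply inv_ge; lra).
    assert (iS2 : / (r * S) <= 1) by (rewrite <- Rinv_1; apply inv_ge; [lra|]; assert (r * / r = 1) by (field; repeat split; lra); nra).
    assert (in0 : 0 < / INR N) by (apply Rinv_0_lt_compat; auto).
    unfold step_prob, adyn; cbv zeta. fold S. unfold indb.
    destruct (C i) eqn:Ei, (C j) eqn:Ej; rewrite ?(fit_t r C j Ej), ?(fit_f r C j Ej); try lra.
    + replace ((1 - 0) * (/ INR N * (W i j / 1 / S) - / INR N * W i j)) with (/ INR N * W i j * (/ S - 1)) by (field; repeat split; lra).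
      apply Rmult_le_pos; [apply Rmult_le_pos|]; lra.
    + replace ((0 - 1) * (/ INR N * (W i j / r / S) - / INR N * W i j)) with (/ INR N * W i j * (1 - / (r * S))) by (field; repeat split; lra).
      apply Rmult_le_pos; [apply Rmult_le_pos|]; lra.
  - exists (/ INR N). intros i j Hi Hj. assert (Wn := W_nonneg N W HW i j Hi Hj).
    set (T := rsum N (fun q => W q j * fit r C q)).
    assert (Tb := T_bounds N W r C j HW Hr Hj). fold T in Tb. assert (Tp := T_pos N W r C j HW HS Hr Hj). fold T in Tp.
    assert (cp := colsum_pos N W HW HS j Hj). set (c := colsum N W j) in *.
    assert (in0 : 0 < / INR N) by (apply Rinv_0_lt_compat; auto).
    unfold step_prob, adyn; cbv zeta. fold T. fold c. unfold indb.
    destruct (C i) eqn:Ei, (C j) eqn:Ej; rewrite ?(fit_t r C i Ei), ?(fit_f r C i Ei); try lra.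
    + assert (X : / (r * c) <= / T) by (apply inv_ge; lra).
      replace ((1 - 0) * (/ INR N * (W i j * r / T) - / INR N * (W i j / c))) with (/ INR N * W i j * r * (/ T - / (r * c))) by (field; repeat split; lra).
      apply Rmult_le_pos; [apply Rmult_le_pos; [apply Rmult_le_pos|]|]; lra.
    + assert (X : / T <= / c) by (apply inv_ge; lra).
      replace ((0 - 1) * (/ INR N * (W i j * 1 / T) - / INR N * (W i j / c))) with (/ INR N * W i j * (/ c - / T)) by (field; repeat split; lra).
      apply Rmult_le_pos; [apply Rmult_le_pos|]; lra.
  - set (Z := rsum N (fun k => / fit r C k)). assert (Zp := Z_pos N r C HN Hr). fold Z in Zp.
    exists (/ Z). intros i j Hi Hj. assert (Wn := W_nonneg N W HW i j Hi Hj).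
    assert (cp := colsum_pos N W HW HS j Hj). set (c := colsum N W j) in *.
    assert (ir : / r <= 1) by (rewrite <- Rinv_1; apply inv_ge; lra).
    assert (iZ : 0 < / Z) by (apply Rinv_0_lt_compat; auto).
    assert (a0 : 0 <= W i j / c) by (apply div_nn; lra).
    unfold step_prob, adyn; cbv zeta. fold Z. fold c. change (rsum N (fun q => W q j)) with c. unfold indb.
    destruct (C i) eqn:Ei, (C j) eqn:Ej; rewrite ?(fit_t r C j Ej), ?(fit_f r C j Ej); try lra.
    + replace ((0 - 1) * (/ r / Z * (W i j / c) - / Z * (W i j / c))) with (/ Z * (W i j / c) * (1 - / r)) by (field; repeat split; lra).
      apply Rmult_le_pos; [apply Rmult_le_pos|]; lra.
  - exists (/ rsum N (fit r C)). intros i j Hi j'. assert (Wn := W_nonneg N W HW i j Hi j').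
    unfold step_prob, adyn; cbv zeta. rewrite (Dd_eq N W r C HW). unfold indb.
    destruct (C i) eqn:Ei, (C j) eqn:Ej; rewrite ?(fit_t r C i Ei), ?(fit_f r C i Ei); try lra.
    + unfold Rdiv. replace ((1 - 0) * (W i j * r * / rsum N (fit r C) - / rsum N (fit r C) * W i j)) with ((r - 1) * (/ rsum N (fit r C)) * W i j) by ring.
      apply Rmult_le_pos; [|auto]. apply Rmult_le_pos; lra.
Qed.

Fixpoint mn (n : nat) (f : nat -> R) : R :=
  match n with O => 1 | S k => Rmin (mn k f) (f k) end.

Lemma mn_le n f k : (k < n)%nat -> mn n f <= f k.
Proof. induction n; simpl; intros H; [lia|]. destruct (Nat.eq_dec k n).
  subst; apply Rmin_r. apply Rle_trans with (mn n f). apply Rmin_l. apply IHn; lia. Qed.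

Lemma mn_pos n f : (forall k, (k < n)%nat -> 0 < f k) -> 0 < mn n f.
Proof. induction n; simpl; intros H; [lra|]. apply Rmin_glb_lt. apply IHn; intros; apply H; lia. apply H; lia. Qed.

Lemma mn_le1 n f : mn n f <= 1.
Proof. induction n; simpl; [lra|]. apply Rle_trans with (mn n f); auto. apply Rmin_l. Qed.

Lemma cv_const c : Un_cv (fun _ => c) c.
Proof. intros e He; exists 0%nat; intros; unfold Rdist; rewrite Rminus_diag, Rabs_R0; lra. Qed.

Lemma cv_ext u v l : (forall t, u t = v t) -> Un_cv v l -> Un_cv u l.
Proof. intros H Hv e He. destruct (Hv e He) as [M HM]. exists M. intros n Hn. rewrite H. auto. Qed.

Lemma main_pos d N W C r : is_weight_matrix N W -> strongly_connected N W -> r > 1 -> (1 <= N)%nat ->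
  exists F1 Fr : R,
    Un_cv (fun t => prob_all_mutant d N W 1 t C) F1 /\
    Un_cv (fun t => prob_all_mutant d N W r t C) Fr /\ F1 <= Fr.
Proof.
  intros HW HS Hr HN.
  assert (Hr1 : 1 <= r) by lra.
  set (P1 := step_prob d N W 1). set (Pr := step_prob d N W r).
  assert (HP1 : stoch N P1) by (split; [apply sp_nonneg; auto; lra| apply sp_sum; auto; lra]).
  assert (HPr : stoch N Pr) by (split; [apply sp_nonneg; auto| apply sp_sum; auto]).
  destruct (stationary N HN (fun x y => adyn d N W y x)) as [pi [Hpi1 [Hpi2 Hpi3]]].
  { intros i j Hi Hj. unfold adyn. destruct d; try (apply (W_nonneg N W HW); auto);
    (apply div_nn; [apply (W_nonneg N W HW); auto| apply colsum_pos; auto]). }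
  cbv beta in Hpi3.
  set (Ph := Phi N pi).
  assert (Hneu : forall C, rsum N (fun i => rsum N (fun j => P1 C i j * ((indb (C i) - indb (C j)) * pi j))) <= 0).
  { intros C0. rewrite (rsum_ext N _ (fun i => / INR N * rsum N (fun j => adyn d N W i j * ((indb (C0 i) - indb (C0 j)) * pi j)))).
    - rewrite rsum_scal, balance; auto. lra.
    - intros i Hi. rewrite <- rsum_scal. apply rsum_ext; intros j Hj. unfold P1. rewrite sp_neutral; auto. ring. }
  destruct (prg_cv N P1 HP1 C) as [F1 HF1].
  assert (F1le : F1 <= Ph C).
  { apply (Rle_cv_lim (Un := fun t => prg N P1 t C) (Vn := fun _ => Ph C)); auto.
    intros t; apply prg_le_Phi; auto. apply cv_const. }
  set (g := fun C0 => proj1_sig (prg_cv N Pr HPr C0)).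
  assert (Hg : forall C0, Un_cv (fun t => prg N Pr t C0) (g C0)) by (intros; unfold g; apply proj2_sig).
  assert (g_all : forall C0, all_mutant N C0 = true -> g C0 = 1).
  { intros C0 H. apply (UL_sequence (fun t => prg N Pr t C0)); auto.
    apply (cv_ext _ (fun _ => 1)). intros; apply prg_all; auto. apply cv_const. }
  assert (g_none : forall C0, (forall k, (k < N)%nat -> C0 k = false) -> g C0 = 0).
  { intros C0 H. apply (UL_sequence (fun t => prg N Pr t C0)); auto.
    apply (cv_ext _ (fun _ => 0)). intros; apply prg_none; auto. apply cv_const. }
  assert (g_nn : forall C0, 0 <= g C0).
  { intros C0. apply (Rle_cv_lim (Un := fun _ => 0) (Vn := fun t => prg N Pr t C0)); auto.
    intros; apply prg_bounds; auto. apply cv_const. }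
  assert (Hharm := prg_harm N Pr HPr g Hg).
  assert (Hsub : forall C0, Ph C0 <= rsum N (fun i => rsum N (fun j => Pr C0 i j * Ph (update C0 i j)))).
  { intros C0. unfold Ph. rewrite Phi_drift by auto.
    destruct (sp_drift d N W r HW HS HN Hr1 C0) as [lam Hlam].
    assert (0 <= rsum N (fun i => rsum N (fun j => Pr C0 i j * ((indb (C0 i) - indb (C0 j)) * pi j)))).
    { apply (drift_ge N (Pr C0) (adyn d N W) pi C0 lam); auto. }
    lra. }
  set (wm := mn N (fun i => mn N (fun j => if Rlt_dec 0 (W i j) then W i j else 1))).
  assert (wm_pos : 0 < wm).
  { apply mn_pos; intros; apply mn_pos; intros. destruct (Rlt_dec 0 (W k k0)); lra. }
  assert (wm_le : forall i j, (i < N)%nat -> (j < N)%nat -> W i j > 0 -> wm <= W i j).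
  { intros i j Hi Hj Hw. apply Rle_trans with (mn N (fun j => if Rlt_dec 0 (W i j) then W i j else 1)).
    apply (mn_le N (fun i => mn N (fun j => if Rlt_dec 0 (W i j) then W i j else 1))); auto.
    eapply Rle_trans. apply (mn_le N (fun j => if Rlt_dec 0 (W i j) then W i j else 1)); eauto.
    destruct (Rlt_dec 0 (W i j)); lra. }
  assert (n1 := INR_ge1 N HN).
  set (dl := wm / (INR N * INR N)).
  assert (Hdl : 0 < dl <= 1).
  { unfold dl. assert (wm <= 1) by apply mn_le1.
    assert (0 < / (INR N * INR N)) by (apply Rinv_0_lt_compat; nra).
    assert (/ (INR N * INR N) <= 1) by (rewrite <- Rinv_1; apply inv_ge; nra).
    unfold Rdiv. split; nra. }
  assert (Hmax := maxp N Pr HPr HN g Ph dl Hdl Hharm Hsub).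
  assert (Hle : Ph C <= g C).
  { apply Hmax.
    - intros C0 H. unfold Ph. rewrite Phi_all, g_all; auto.
    - intros C0 H. unfold Ph. rewrite Phi_none, g_none; auto.
    - intros C0. assert (Ph C0 <= 1) by (apply Phi_bounds; auto). specialize (g_nn C0). lra.
    - intros C0 [u [Hu Hcu]] [v [Hv Hcv]].
      destruct (edge_cut N W C0 u v Hu Hcu Hv Hcv (HS u v Hu Hv)) as [i [j [Hi [Hj [Hci [Hcj Hw]]]]]].
      exists i, j. repeat split; auto.
      apply Rle_trans with (W i j / (INR N * INR N)).
      + unfold dl, Rdiv. apply Rmult_le_compat_r. left; apply Rinv_0_lt_compat; nra. apply wm_le; auto.
      + unfold Pr. apply sp_lower; auto. }
  exists F1, (g C). split; [|split].
  - apply (cv_ext _ (fun t => prg N P1 t C)); auto. intros; apply prg_eq.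
  - apply (cv_ext _ (fun t => prg N Pr t C)); auto. intros; apply prg_eq.
  - lra.
Qed.

Theorem theorem5 (d : Dynamics) (N : nat) (W : nat -> nat -> R)
  (C : nat -> bool) (r : R) :
  is_weight_matrix N W -> strongly_connected N W -> r > 1 ->
  exists F1 Fr : R,
    Un_cv (fun t => prob_all_mutant d N W 1 t C) F1 /\
    Un_cv (fun t => prob_all_mutant d N W r t C) Fr /\
    F1 <= Fr.
Proof.
  intros HW HS Hr. destruct N as [|N'].
  - exists 0, 0. assert (Z : forall r', Un_cv (fun t => prob_all_mutant d 0 W r' t C) 0).
    { intros r' e He. exists 1%nat. intros n Hn. destruct n; [lia|]. simpl. unfold Rdist. rewrite Rminus_diag, Rabs_R0; lra. }
    split; [apply Z|split; [apply Z| lra]].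
  - apply main_pos; auto. lia.
Qed.
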